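(* Let $(R,\cdot,\mathfrak e)$ be a partial $A$-module algebra. Then the product of the smash product $R\#A$ is left nondegenerate: if $\xi\in R\#A$ satisfies $(x\#a)\xi=0$ for all $x\in R$ and $a\in A$, then $\xi=0$.
   Context: $\Bbbk$ is a field; $M(R)$ is the multiplier algebra of an algebra $R$ with nondegenerate product. $A$ is a regular multiplier Hopf algebra with comultiplication $\Delta$, counit $\varepsilon$, bijective antipode $S$. A partial $A$-module algebra is a triple $(R,\cdot,\mathfrak e)$, $\cdot:A\otimes R\to R$ and $\mathfrak e:A\to M(R)$ linear, such that for all $a,b\in A$, $x,y\in R$: (i) $a\cdot(x(b\cdot y))=(a_{(1)}\cdot x)(a_{(2)}b\cdot y)$; (ii) $\mathfrak e(a)(b\cdot x)=a_{(1)}\cdot(S(a_{(2)})b\cdot x)$ and $\mathfrak e(A)R\subseteq A\cdot R$; (iii) given $a_1,\dots,a_n\in A$, $x_1,\dots,x_m\in R$ there is $b\in A$ with $a_ib=a_i=ba_i$ and $a_i\cdot x_j=a_i\cdot(b\cdot x_j)$; (iv) $A\cdot x=0$ implies $x=0$. The smash product $R\#A$ is the vector space $R\otimes A$ with product $(x\#a)(y\#b)=x(a_{(1)}\cdot y)\#a_{(2)}b$. *)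

(* Defs.v *)
(* Algebras here are NON-UNITAL, possibly infinite-dimensional
   algebras over a field K, so they are modelled as an lmodType K together with
   a bilinear associative product (MathComp rings are unital, hence unusable). *)
From HB Require Import structures.
From mathcomp Require Import all_boot all_algebra.
Set Implicit Arguments. Unset Strict Implicit. Unset Printing Implicit Defensive.
Import GRing.Theory.
Local Open Scope ring_scope.

Section Defs.
Variable K : fieldType.

Definition lin_functional (U : lmodType K) (f : U -> K) : Prop :=
  forall (c : K) (u v : U), f (c *: u + v) = c * f u + f v.

(* Two formal sums denote the same tensor iff they have
   the same image under the canonical injective map U (x) V -> Hom(U^*, V),
   u (x) v |-> (f |-> f(u) v), which is injective over a field. *)
Definition tensor (U V : lmodType K) := seq (U * V).

Definition teq (U V : lmodType K) (s t : tensor U V) : Prop :=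
  forall f : U -> K, lin_functional f ->
    \sum_(p <- s) f p.1 *: p.2 = \sum_(p <- t) f p.1 *: p.2.

Definition teq3 (U V W : lmodType K) (s t : seq (U * V * W)) : Prop :=
  forall (f : U -> K) (g : V -> K), lin_functional f -> lin_functional g ->
    \sum_(p <- s) (f p.1.1 * g p.1.2) *: p.2
  = \sum_(p <- t) (f p.1.1 * g p.1.2) *: p.2.

Definition tscale (U V : lmodType K) (c : K) (z : tensor U V) : tensor U V :=
  [seq (c *: p.1, p.2) | p <- z].

Record nalg := NAlg {
  ncar :> lmodType K;
  nmul : ncar -> ncar -> ncar;
  nmulA : forall x y z, nmul x (nmul y z) = nmul (nmul x y) z;
  nmul_linl : forall (c : K) x y z, nmul (c *: x + y) z = c *: nmul x z + nmul y z;
  nmul_linr : forall (c : K) x y z, nmul z (c *: x + y) = c *: nmul z x + nmul z y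
}.

Definition nondegenerate (R : nalg) : Prop :=
  (forall x : R, (forall y : R, nmul x y = 0) -> x = 0) /\
  (forall x : R, (forall y : R, nmul y x = 0) -> x = 0).

(* ---------------- multiplier algebra M(R) (double centralisers) ----------
   m = (mL m, mR m) with  mL m x = m x  and  mR m x = x m. *)
Record multiplier (R : nalg) := Mult { mL : R -> R; mR : R -> R }.

Definition is_multiplier (R : nalg) (m : multiplier R) : Prop :=
  [/\ forall (c : K) (x y : R), mL m (c *: x + y) = c *: mL m x + mL m y,
      forall (c : K) (x y : R), mR m (c *: x + y) = c *: mR m x + mR m y,
      forall x y : R, mL m (nmul x y) = nmul (mL m x) y,
      forall x y : R, mR m (nmul x y) = nmul x (mR m y) &
      forall x y : R, nmul x (mL m y) = nmul (mR m x) y].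

Section TensorAlg.
Variable A : nalg.

Definition tmul (s t : tensor A A) : tensor A A :=
  [seq (nmul p.1 q.1, nmul p.2 q.2) | p <- s, q <- t].
(* (a (x) 1) z,  z (a (x) 1),  (1 (x) b) z,  z (1 (x) b) *)
Definition lA (a : A) (z : tensor A A) : tensor A A := [seq (nmul a p.1, p.2) | p <- z].
Definition rA (z : tensor A A) (a : A) : tensor A A := [seq (nmul p.1 a, p.2) | p <- z].
Definition l1 (b : A) (z : tensor A A) : tensor A A := [seq (p.1, nmul b p.2) | p <- z].
Definition r1 (z : tensor A A) (b : A) : tensor A A := [seq (p.1, nmul p.2 b) | p <- z].
End TensorAlg.

(* ---------------- regular multiplier Hopf algebras (Van Daele) -----------
   Dl a z = Delta(a) z  and  Dr a z = z Delta(a)  (Delta(a) in M(A (x) A));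
   D1 a b = Delta(a)(1 (x) b),  D2 a b = (a (x) 1)Delta(b),
   D3 a b = Delta(a)(b (x) 1),  D4 a b = (1 (x) a)Delta(b)   (in A (x) A);
   eps = counit, S = antipode, Sinv = its inverse. *)
Record mha_data (A : nalg) := MHAData {
  Dl : A -> tensor A A -> tensor A A;
  Dr : A -> tensor A A -> tensor A A;
  D1 : A -> A -> tensor A A;
  D2 : A -> A -> tensor A A;
  D3 : A -> A -> tensor A A;
  D4 : A -> A -> tensor A A;
  eps : A -> K;
  antipode : A -> A;
  antipode_inv : A -> A
}.

Definition Tmap (A : nalg) (D : A -> A -> tensor A A) (z : tensor A A) : tensor A A :=
  flatten [seq D p.1 p.2 | p <- z].

Definition tbijective (A : nalg) (T : tensor A A -> tensor A A) : Prop :=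
  (forall z z', teq (T z) (T z') -> teq z z') /\
  (forall w, exists z, teq (T z) w).

Record regular_mha (A : nalg) (H : mha_data A) : Prop := {
  rmha_nondeg : nondegenerate A;
  (* each Delta(a) is a multiplier of A (x) A *)
  Dl_wd : forall a z z', teq z z' -> teq (Dl H a z) (Dl H a z');
  Dr_wd : forall a z z', teq z z' -> teq (Dr H a z) (Dr H a z');
  Dl_lin : forall a c z z', teq (Dl H a (tscale c z ++ z')) (tscale c (Dl H a z) ++ Dl H a z');
  Dr_lin : forall a c z z', teq (Dr H a (tscale c z ++ z')) (tscale c (Dr H a z) ++ Dr H a z');
  Dl_mul : forall a z z', teq (Dl H a (tmul z z')) (tmul (Dl H a z) z');
  Dr_mul : forall a z z', teq (Dr H a (tmul z z')) (tmul z (Dr H a z'));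
  DlDr : forall a z z', teq (tmul z (Dl H a z')) (tmul (Dr H a z) z');
  Delta_linl : forall (c : K) a b z, teq (Dl H (c *: a + b) z) (tscale c (Dl H a z) ++ Dl H b z);
  Delta_linr : forall (c : K) a b z, teq (Dr H (c *: a + b) z) (tscale c (Dr H a z) ++ Dr H b z);
  Delta_mull : forall a b z, teq (Dl H (nmul a b) z) (Dl H a (Dl H b z));
  Delta_mulr : forall a b z, teq (Dr H (nmul a b) z) (Dr H b (Dr H a z));
  D1_spec : forall a b z, teq (Dl H a (l1 b z)) (tmul (D1 H a b) z) /\
                          teq (r1 (Dr H a z) b) (tmul z (D1 H a b));
  D2_spec : forall a b z, teq (lA a (Dl H b z)) (tmul (D2 H a b) z) /\
                          teq (Dr H b (rA z a)) (tmul z (D2 H a b));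
  D3_spec : forall a b z, teq (Dl H a (lA b z)) (tmul (D3 H a b) z) /\
                          teq (rA (Dr H a z) b) (tmul z (D3 H a b));
  D4_spec : forall a b z, teq (l1 a (Dl H b z)) (tmul (D4 H a b) z) /\
                          teq (Dr H b (r1 z a)) (tmul z (D4 H a b));
  (* coassociativity:
     (a(x)1(x)1)(Delta(x)id)(Delta(b)(1(x)c)) = (id(x)Delta)((a(x)1)Delta(b))(1(x)1(x)c) *)
  coassoc : forall a b c,
    teq3 [seq (u.1, u.2, p.2) | p <- D1 H b c, u <- D2 H a p.1]
         [seq (p.1, t.1, t.2) | p <- D2 H a b, t <- D1 H p.2 c];
  (* multiplier Hopf algebra: T1, T2 bijective; regular: also for Delta^cop *)
  T1_bij : tbijective (Tmap (D1 H));
  T2_bij : tbijective (Tmap (D2 H));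
  T3_bij : tbijective (Tmap (D3 H));
  T4_bij : tbijective (Tmap (D4 H));
  eps_lin : lin_functional (eps H);
  eps_mul : forall a b, eps H (nmul a b) = eps H a * eps H b;
  eps_l : forall a b, \sum_(p <- D1 H a b) eps H p.1 *: p.2 = nmul a b;
  eps_r : forall a b, \sum_(p <- D2 H a b) eps H p.2 *: p.1 = nmul a b;
  S_lin : forall (c : K) a b, antipode H (c *: a + b) = c *: antipode H a + antipode H b;
  S_l : forall a b, \sum_(p <- D1 H a b) nmul (antipode H p.1) p.2 = eps H a *: b;
  S_r : forall a b, \sum_(p <- D2 H a b) nmul p.1 (antipode H p.2) = eps H b *: a;
  S_invl : forall a, antipode_inv H (antipode H a) = a;
  S_invr : forall a, antipode H (antipode_inv H a) = a
}.

Record partial_module_algebra (A : nalg) (H : mha_data A) (R : nalg)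
    (act : A -> R -> R) (e : A -> multiplier R) : Prop := {
  R_nondeg : nondegenerate R;
  act_linl : forall (c : K) a b x, act (c *: a + b) x = c *: act a x + act b x;
  act_linr : forall (c : K) a x y, act a (c *: x + y) = c *: act a x + act a y;
  e_mult : forall a, is_multiplier (e a);
  e_linL : forall (c : K) a b y, mL (e (c *: a + b)) y = c *: mL (e a) y + mL (e b) y;
  e_linR : forall (c : K) a b y, mR (e (c *: a + b)) y = c *: mR (e a) y + mR (e b) y;
  pma_i : forall a b x y,
    act a (nmul x (act b y)) = \sum_(p <- D1 H a b) nmul (act p.1 x) (act p.2 y);
  (* (ii) e(a)(b.x) = a_(1).(S(a_(2))b.x), where
          a_(1) (x) S(a_(2))b = (id (x) S)((1 (x) S^-1(b))Delta(a)) *)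
  pma_ii : forall a b x,
    mL (e a) (act b x) = \sum_(p <- D4 H (antipode_inv H b) a) act p.1 (act (antipode H p.2) x);
  pma_ii' : forall a y, exists s : seq (A * R), mL (e a) y = \sum_(p <- s) act p.1 p.2;
  pma_iii : forall (as_ : seq A) (xs : seq R), exists b : A,
    forall a, a \in as_ -> [/\ nmul a b = a, nmul b a = a &
                              forall x, x \in xs -> act a x = act a (act b x)];
  pma_iv : forall x : R, (forall a : A, act a x = 0) -> x = 0
}.

(* ---------------- the smash product R # A ----------------
   (x # a) xi  for xi = sum_i y_i # b_i :
   sum_i x(a_(1).y_i) # a_(2) b_i, with a_(1) (x) a_(2)b_i = Delta(a)(1 (x) b_i). *)
Definition smash_lmul (A : nalg) (H : mha_data A) (R : nalg) (act : A -> R -> R)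
    (x : R) (a : A) (xi : tensor R A) : tensor R A :=
  flatten [seq [seq (nmul x (act q.1 p.1), q.2) | q <- D1 H a p.2] | p <- xi].

End Defs.

(* Main.v *)
Require Import Defs.
From HB Require Import structures.
From mathcomp Require Import all_boot all_algebra.
From mathcomp Require Import boolp classical_sets.
Set Implicit Arguments. Unset Strict Implicit. Unset Printing Implicit Defensive.
Import GRing.Theory.
Local Open Scope ring_scope.

Section Sep.
Variables (K : fieldType) (V : lmodType K) (v : V).
Hypothesis v0 : v != 0.

Definition goodG (G : V * K -> Prop) :=
  [/\ G (v, 1), (forall x k y l, G (x,k) -> G (y,l) -> G (x+y, k+l)),
      (forall c x k, G (x,k) -> G (c*:x, c*k)) & (forall k, G (0,k) -> k = 0)].

Lemma exists_sep : exists f : V -> K, lin_functional f /\ f v = 1.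
Proof.
pose T := {G : V * K -> Prop | goodG G}.
have L0 : goodG (fun p => exists c, p = (c *: v, c)).
  split.
  - by exists 1; rewrite scale1r.
  - by move=> x k y l [c [-> ->]] [d [-> ->]]; exists (c+d); rewrite scalerDl.
  - by move=> c x k [d [-> ->]]; exists (c*d); rewrite scalerA.
  - move=> k [c [e1 ->]]; move: e1 => /esym/eqP.
    by rewrite scaler_eq0 (negbTE v0) orbF => /eqP.
pose R (s t : T) := `[< forall p, sval s p -> sval t p >].
have [|||M HM] := @ZL_preorder T (exist _ _ L0) R.
- by move=> t; apply/asboolP.
- by move=> r s t /asboolP rs /asboolP st; apply/asboolP => p /rs /st.
- move=> A Atot; case: (pselect (exists s, A s)) => [[s0 As0]|nA]; last first.
    by exists (exist _ _ L0) => s As; exfalso; apply: nA; exists s.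
  pose U p := exists s, A s /\ sval s p.
  have gU : goodG U.
    split.
    - by exists s0; split => //; case: (svalP s0).
    - move=> x k y l [s [As sx]] [t [At ty]].
      case: (Atot s t As At) => /asboolP st.
      + exists t; split => //; case: (svalP t) => _ Hadd _ _; apply: Hadd => //; exact: st.
      + exists s; split => //; case: (svalP s) => _ Hadd _ _; apply: Hadd => //; exact: st.
    - move=> c x k [s [As sx]]; exists s; split => //.
      by case: (svalP s) => _ _ Hs _; apply: Hs.
    - move=> k [s [As sx]]; by case: (svalP s) => _ _ _ Hf; apply: Hf.
  by exists (exist _ U gU) => s As; apply/asboolP => p sp; exists s.
case: M HM => G gG HM.
case: (gG) => Gv Gadd Gsc Gf.
have G00 : G (0, 0) by move: (Gsc 0 _ _ Gv); rewrite scale0r mul0r.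
have dom : forall u, exists k, G (u,k).
  move=> u; apply: contrapT => nu.
  pose G' p := exists x k c, G (x,k) /\ p = (x + c*:u, k).
  have gG' : goodG G'.
    split.
    - by exists v, 1, 0; rewrite scale0r addr0.
    - move=> x k y l [x1 [k1 [c [Gx e]]]] [y1 [l1 [d [Gy e']]]].
      case: e => -> ->; case: e' => -> ->.
      exists (x1 + y1), (k1 + l1), (c + d); split; first exact: Gadd.
      by rewrite scalerDl addrACA.
    - move=> c' x k [x1 [k1 [c [Gx e]]]]; case: e => -> ->.
      exists (c' *: x1), (c' * k1), (c' * c); split; first exact: Gsc.
      by rewrite scalerDr scalerA.
    - move=> k [x [k' [c [Gx e]]]]; case: e => e1 e2; subst k'.
      case: (eqVneq c 0) => [c0|cn0].
        move: e1; rewrite c0 scale0r addr0 => x0; subst x; exact: Gf.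
      exfalso; apply: nu; exists ((- c^-1) * k).
      have -> : u = (- c^-1) *: x.
        have cu : c *: u = - x by apply/eqP; rewrite -addr_eq0 addrC -e1.
        by rewrite scaleNr -scalerN -cu scalerA mulVf // scale1r.
      exact: Gsc.
  have /HM : R (exist _ G gG) (exist _ G' gG').
    by apply/asboolP => -[x k] Gxk; exists x, k, 0; rewrite scale0r addr0.
  move=> /asboolP /= H'.
  have : G' (u, 0) by exists 0, 0, 1; rewrite scale1r add0r.
  by move/H' => Gu0; apply: nu; exists 0.
have [f Hf] := choice dom.
have uniq : forall y k l, G (y,k) -> G (y,l) -> k = l.
  move=> y k l Gk Gl; have := Gadd _ _ _ _ Gk (Gsc (-1) _ _ Gl).
  rewrite scaleN1r mulN1r subrr => /Gf /eqP; rewrite subr_eq0 => /eqP //.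
exists f; split.
  move=> c x y; apply: (uniq (c *: x + y)); first exact: Hf.
  by apply: Gadd; [apply: Gsc|]; apply: Hf.
by apply: (uniq v); [apply: Hf|].
Qed.
End Sep.

Lemma sep (K : fieldType) (V : lmodType K) (v : V) :
  (forall f : V -> K, lin_functional f -> f v = 0) -> v = 0.
Proof.
move=> H; case: (eqVneq v 0) => // nz.
have [f [lf fv]] := exists_sep nz.
by move: (H f lf); rewrite fv => /eqP; rewrite oner_eq0.
Qed.

Section Lin.
Variable K : fieldType.

Lemma lf0 (V : lmodType K) (f : V -> K) : lin_functional f -> f 0 = 0.
Proof.
move=> lf; have h := lf 1 0 0; rewrite scale1r addr0 mul1r in h.
by apply: (addrI (f 0)); rewrite addr0 -h.
Qed.
Lemma lfD (V : lmodType K) (f : V -> K) u w : lin_functional f -> f (u + w) = f u + f w.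
Proof. by move=> lf; have := lf 1 u w; rewrite scale1r mul1r. Qed.
Lemma lfZ (V : lmodType K) (f : V -> K) c u : lin_functional f -> f (c *: u) = c * f u.
Proof. by move=> lf; have := lf c u 0; rewrite addr0 lf0 // addr0. Qed.
Lemma lfB (V : lmodType K) (f : V -> K) u w : lin_functional f -> f (u - w) = f u - f w.
Proof. by move=> lf; rewrite lfD // -scaleN1r lfZ // mulN1r. Qed.
Lemma lf_sum (V : lmodType K) (f : V -> K) I (s : seq I) (F : I -> V) :
  lin_functional f -> f (\sum_(i <- s) F i) = \sum_(i <- s) f (F i).
Proof.
move=> lf; elim: s => [|i s IH]; first by rewrite !big_nil lf0.
by rewrite !big_cons lfD // IH.
Qed.

Definition linm (U V : lmodType K) (h : U -> V) :=
  forall c u w, h (c *: u + w) = c *: h u + h w.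

Lemma lm0 (U V : lmodType K) (h : U -> V) : linm h -> h 0 = 0.
Proof.
move=> lf; have h0 := lf 1 0 0; rewrite scale1r addr0 scale1r in h0.
by apply: (addrI (h 0)); rewrite addr0 -h0.
Qed.
Lemma lmD (U V : lmodType K) (h : U -> V) u w : linm h -> h (u + w) = h u + h w.
Proof. by move=> lf; have := lf 1 u w; rewrite !scale1r. Qed.
Lemma lmZ (U V : lmodType K) (h : U -> V) c u : linm h -> h (c *: u) = c *: h u.
Proof. by move=> lf; have := lf c u 0; rewrite addr0 lm0 // addr0. Qed.
Lemma lmB (U V : lmodType K) (h : U -> V) u w : linm h -> h (u - w) = h u - h w.
Proof. by move=> lf; rewrite lmD // -scaleN1r lmZ // scaleN1r. Qed.
Lemma lm_sum (U V : lmodType K) (h : U -> V) I (s : seq I) (F : I -> U) :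
  linm h -> h (\sum_(i <- s) F i) = \sum_(i <- s) h (F i).
Proof.
move=> lf; elim: s => [|i s IH]; first by rewrite !big_nil lm0.
by rewrite !big_cons lmD // IH.
Qed.
Lemma lf_comp (U V : lmodType K) (f : V -> K) (h : U -> V) :
  lin_functional f -> linm h -> lin_functional (fun u => f (h u)).
Proof. by move=> lf lh c u w; rewrite lh lf. Qed.

Lemma swap (U V : lmodType K) (g : V -> K) (phi : U -> K) I (s : seq I) F G :
  lin_functional g -> lin_functional phi ->
  g (\sum_(p <- s) phi (F p) *: G p) = phi (\sum_(p <- s) g (G p) *: F p).
Proof.
move=> lg lphi; rewrite lf_sum // lf_sum //; apply: eq_bigr => p _.
by rewrite lfZ // lfZ // mulrC.
Qed.

Variable A : nalg K.
Lemma linmL (x : A) : linm (nmul x). Proof. by move=> c u w; rewrite nmul_linr. Qed.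
Lemma linmR (x : A) : linm (fun y : A => nmul y x). Proof. by move=> c u w; rewrite nmul_linl. Qed.

Definition E (phi : A -> K) (s : seq (A * A)) : A := \sum_(q <- s) phi q.1 *: q.2.

Lemma teqE (s t : seq (A * A)) phi : teq s t -> lin_functional phi -> E phi s = E phi t.
Proof. by move=> h; apply: h. Qed.
Lemma E_l1 phi c s : E phi (l1 c s) = nmul c (E phi s).
Proof.
rewrite /E big_map (lm_sum _ _ (linmL c)); apply: eq_bigr => p _.
by rewrite (lmZ _ _ (linmL c)).
Qed.
Lemma E_r1 phi s b : E phi (r1 s b) = nmul (E phi s) b.
Proof.
rewrite /E big_map (lm_sum _ _ (linmR b)); apply: eq_bigr => p _.
by rewrite (lmZ _ _ (linmR b)).
Qed.
Lemma E_tmul phi s z : E phi (tmul s z) =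
  \sum_(p <- s) \sum_(q <- z) phi (nmul p.1 q.1) *: nmul p.2 q.2.
Proof. by rewrite /E /tmul big_allpairs_dep. Qed.
Lemma tmul_l1 phi c s z : E phi (tmul (l1 c s) z) = E phi (l1 c (tmul s z)).
Proof.
rewrite E_tmul /E /l1 /tmul !big_map big_allpairs_dep.
by apply: eq_bigr => p _; apply: eq_bigr => q _ /=; rewrite nmulA.
Qed.
Lemma tmul_r1 phi s b z : E phi (tmul s (l1 b z)) = E phi (tmul (r1 s b) z).
Proof.
rewrite !E_tmul /l1 /r1 big_map.
by apply: eq_bigr => p _; rewrite big_map; apply: eq_bigr => q _ /=; rewrite nmulA.
Qed.
Lemma E_tmul1 phi s u w : E phi (tmul s [:: (u, w)]) =
  \sum_(p <- s) phi (nmul p.1 u) *: nmul p.2 w.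
Proof. by rewrite E_tmul; apply: eq_bigr => p _; rewrite big_seq1. Qed.
Lemma E_mulr phi s w : nmul (E phi s) w = \sum_(p <- s) phi p.1 *: nmul p.2 w.
Proof. by rewrite -E_r1 /E big_map. Qed.

Hypothesis Anon : Defs.nondegenerate A.

Lemma TN (s t : seq (A * A)) : (forall z, teq (tmul s z) (tmul t z)) -> teq s t.
Proof.
case: Anon => AnL AnR h phi lphi.
have step1 : forall psi, lin_functional psi -> forall u,
    E (fun y => psi (nmul y u)) s = E (fun y => psi (nmul y u)) t.
  move=> psi lpsi u; apply/eqP; rewrite -subr_eq0; apply/eqP; apply: AnL => w.
  have := h [:: (u, w)] psi lpsi.
  rewrite -/(E psi _) -/(E psi (tmul t _)) !E_tmul1 => e.
  by rewrite (lmB _ _ (linmR w)) !E_mulr e subrr.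
apply/eqP; rewrite -subr_eq0; apply/eqP; apply: sep => g lg.
rewrite lfB // /E !(swap _ _ _ lg lphi) -lfB //.
set Y := (X in phi X).
suff -> : Y = 0 by rewrite lf0.
apply: AnL => u; apply: sep => psi lpsi.
have lchi : lin_functional (fun y => psi (nmul y u)) by apply: lf_comp => //; exact: linmR.
rewrite /Y (lmB _ _ (linmR u)) lfB //.
have e x : psi (nmul (\sum_(p <- x) g p.2 *: p.1) u) = g (E (fun y => psi (nmul y u)) x).
  by rewrite /E (swap _ _ _ lg lchi).
by rewrite !e (step1 _ lpsi); apply/eqP; rewrite subr_eq0.
Qed.
End Lin.

Unset Implicit Arguments.
Theorem mainTheorem14 (K : fieldType) (A : nalg K) (H : mha_data A)
    (HA : regular_mha H) (R : nalg K) (act : A -> R -> R) (e : A -> multiplier R)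
    (HR : partial_module_algebra H act e) (xi : tensor R A) :
  (forall (x : R) (a : A), teq (smash_lmul H act x a xi) [::]) ->
  teq xi [::].
Proof.
move=> hyp.
have Anon := rmha_nondeg HA; case: (Anon) => AnL AnR.
have RL : forall a b c, teq (l1 c (D1 H a b)) (r1 (D4 H c a) b).
  move=> a b c; apply: TN => // z phi lphi.
  rewrite -/(E phi _) -/(E phi (tmul (r1 _ _) _)).
  rewrite tmul_l1 E_l1 -(teqE (proj1 (D1_spec HA a b z)) lphi) -E_l1.
  by rewrite (teqE (proj1 (D4_spec HA c a (l1 b z))) lphi) tmul_r1.
have linphi : forall f, lin_functional f -> forall (x : R) (y : R),
    lin_functional (fun c : A => f (nmul x (act c y))).
  move=> f lf x y; apply: lf_comp => //.
  by move=> c u w; rewrite (act_linl HR) nmul_linr.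
have hyp' : forall f, lin_functional f -> forall x a,
    \sum_(p <- xi) E (fun c => f (nmul x (act c p.1))) (D1 H a p.2) = 0.
  move=> f lf x a; have := hyp x a f lf.
  rewrite big_nil /smash_lmul big_flatten /= big_map => h0; rewrite -[RHS]h0.
  by apply: eq_bigr => p _; rewrite /E big_map.
have stepC : forall f, lin_functional f -> forall x a0,
    \sum_(p <- xi) f (nmul x (act a0 p.1)) *: p.2 = 0.
  move=> f lf x a0; apply: AnR => d.
  have [z hz] := (T4_bij HA).2 [:: (a0, d)].
  have e1 : forall c a, \sum_(p <- xi)
      nmul (E (fun c => f (nmul x (act c p.1))) (D4 H c a)) p.2 = 0.
    move=> c a; rewrite -[RHS](lm0 (linmL c)) -[X in _ = nmul _ X](hyp' f lf x a) (lm_sum _ _ (linmL c)).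
    apply: eq_bigr => p _; rewrite -E_r1 -E_l1; symmetry.
    exact: (RL a p.2 c _ (linphi f lf x p.1)).
  transitivity (\sum_(k <- z) \sum_(p <- xi)
      nmul (E (fun c => f (nmul x (act c p.1))) (D4 H k.1 k.2)) p.2); last first.
    by rewrite big1 // => k _; apply: e1.
  rewrite exchange_big /= (lm_sum _ _ (linmL d)); apply: eq_bigr => p _.
  rewrite -(lm_sum _ _ (linmR p.2)).
  have := hz _ (linphi f lf x p.1).
  rewrite -/(E _ _) /Tmap big_flatten big_map => ->.
  rewrite big_seq1 (lmZ _ _ (linmL d)) (lmZ _ _ (linmR p.2)) /=.
  by [].
move=> f lf; rewrite big_nil; apply: sep => g lg.
rewrite (swap _ _ _ lg lf).
set W := (X in f X).
suff -> : W = 0 by rewrite lf0.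
apply: (pma_iv HR) => a; apply: (proj2 (R_nondeg HR)) => y; apply: sep => f' lf'.
have lchi : lin_functional (fun w => f' (nmul y (act a w))).
  apply: lf_comp => // c u w; by rewrite (act_linr HR) nmul_linr.
have := swap xi (fun p => p.1) (fun p => p.2) lg lchi.
by rewrite /= stepC // lf0 // => <-.
Qed.
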